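(* Let $F$ be a continuous distribution function with a density that is symmetric about $\theta$ and unimodal, and let $0 \le \varepsilon < 1/2$ and $0 \le \delta < (1-\varepsilon)/2$. Then $$\sup_{G \in \mathcal{F}_\delta(F)} \Big[ G^{-1}\Big(\frac{1+\varepsilon}{2}\Big) - G^{-1}\Big(\frac{1-\varepsilon}{2}\Big)\Big] = F^{-1}\Big\{\frac{1+\varepsilon}{2(1-\delta)}\Big\} - F^{-1}\Big\{\frac{1-\varepsilon}{2(1-\delta)}\Big\},$$ and the supremum is approached by $G_m = (1-\delta)F + \delta\,\delta_m$ as $m \to \infty$, where $\delta_m$ is the point mass at $m$.
   Context: For a distribution function $G$, $G^{-1}(p) = \inf\{x : G(x) \ge p\}$. For $0 \le \delta < 1/2$, $\mathcal{F}_\delta(F) = \{G : G = (1-\delta)F + \delta H,\ H \text{ an arbitrary distribution on } \mathbb{R}\}$. *)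

(* Defs.v *)
From HB Require Import structures.
From mathcomp Require Import all_boot all_order all_algebra.
From mathcomp Require Import all_classical all_reals all_analysis.
Set Implicit Arguments. Unset Strict Implicit. Unset Printing Implicit Defensive.
Import Order.TTheory GRing.Theory Num.Theory.
Import numFieldNormedType.Exports.
Local Open Scope classical_set_scope.
Local Open Scope ring_scope.

Definition is_distfun (R : realType) (G : R -> R) : Prop :=
  [/\ {homo G : x y / x <= y},
      (forall a : R, G x @[x --> a^'+] --> G a),
      G x @[x --> -oo] --> (0:R) &
      G x @[x --> +oo] --> (1:R)].

Definition quantile (R : realType) (G : R -> R) (p : R) : R :=
  inf [set x : R | p <= G x].

Definition mixture (R : realType) (delta : R) (F H : R -> R) : R -> R :=
  fun x => (1 - delta) * F x + delta * H x.

Definition pointmass_df (R : realType) (m : R) : R -> R :=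
  fun x => if m <= x then 1 else 0.

Definition is_density (R : realType) (f F : R -> R) : Prop :=
  [/\ measurable_fun setT f,
      (forall x, 0 <= f x) &
      (forall x, (F x)%:E =
         (\int[lebesgue_measure]_(t in `]-oo, x]) (f t)%:E)%E)].

Definition sym_unimodal (R : realType) (f : R -> R) (theta : R) : Prop :=
  [/\ (forall x, f (theta + x) = f (theta - x)),
      (forall x y, theta <= x -> x <= y -> f y <= f x) &
      (forall x y, x <= y -> y <= theta -> f x <= f y)].

(* Main.v *)
Require Import Defs.
From HB Require Import structures.
From mathcomp Require Import all_boot all_order all_algebra.
From mathcomp Require Import all_classical all_reals all_analysis.
From mathcomp Require Import measurable_realfun lebesgue_measure lebesgue_integral.
From mathcomp Require Import ring lra.
Import Order.TTheory GRing.Theory Num.Theory.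
Import numFieldNormedType.Exports.
Local Open Scope classical_set_scope.
Local Open Scope ring_scope.



Lemma quantile_leP (R : realType) (G : R -> R) (p x : R) :
  {homo G : x y / x <= y} -> (forall a, G x @[x --> a^'+] --> G a) ->
  (exists M, G M < p) -> (exists y, p <= G y) ->
  (quantile G p <= x) = (p <= G x).
Proof.
move=> Gh Gr [M GM] [y Gy].
set S := [set x : R | p <= G x].
have S0 : S !=set0 by exists y.
have lbS : lbound S M.
  move=> z Sz; rewrite leNgt; apply/negP => zM.
  have := le_lt_trans (le_trans Sz (Gh _ _ (ltW zM))) GM; by rewrite ltxx.
have hl : has_lbound S by exists M.
apply/idP/idP => [qx|px]; last by apply: ge_inf.
suff Gq : p <= G (quantile G p) by apply: le_trans Gq (Gh _ _ qx).
apply: (@ler_cvg_to _ _ _ _ (fun=> p) G _ _ (cvg_cst p) (Gr _)).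
near=> z.
have : quantile G p < z by near: z; exact: nbhs_right_gt.
move=> /(inf_lt S0) [w Sw wz].
exact: le_trans Sw (Gh _ _ (ltW wz)).
Unshelve. all: by end_near.
Qed.


Lemma dens_bound (R : realType) (f F : R -> R) (a b lo hi : R) :
  is_density f F -> a <= b -> 0 <= lo ->
  (forall z, a < z -> z <= b -> lo <= f z /\ f z <= hi) ->
  (b - a) * lo <= F b - F a /\ F b - F a <= (b - a) * hi.
Proof.
move=> [mf f0 FE] ab lo0 hz.
have mfE := proj2 (measurable_EFinP _ _) mf.
have split : (F b)%:E = ((F a)%:E + \int[lebesgue_measure]_(t in `]a, b]) (f t)%:E)%E.
  rewrite !FE -ge0_integral_setU //=.
  - by rewrite -itv_bndbnd_setU // bnd_simp.
  - exact: measurable_funS mfE.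
  - by move=> x _; rewrite lee_fin.
  - apply/disj_setPS => x [] /=; rewrite !in_itv /= => xa /andP[ax _].
    by move: (le_lt_trans xa ax); rewrite ltxx.
have Hint : (((b - a) * lo)%:E <= \int[lebesgue_measure]_(t in `]a, b]) (f t)%:E
         <= ((b - a) * hi)%:E)%E.
  have lm : lebesgue_measure `]a, b] = (b - a)%:E.
    rewrite lebesgue_measure_itv /= lte_fin.
    case: (ltP a b) => [ab'|ba]; first by rewrite EFinB.
    have -> : a = b by apply/le_anti; rewrite ab ba.
    by rewrite subrr.
  apply/andP; split.
  - apply: (@le_trans _ _ (\int[lebesgue_measure]_(t in `]a, b]) (cst lo%:E) t))%E.
      by rewrite integral_cst //= lm -EFinM mulrC.
    apply: ge0_le_integral.
    + exact: measurable_itv.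
    + by move=> x _; rewrite lee_fin.
    + exact: measurable_cst.
    + exact: measurable_funS mfE.
    + move=> x; rewrite /= in_itv /= => /andP[ax xb].
      by rewrite lee_fin; case: (hz x ax xb).
  - apply: (@le_trans _ _ (\int[lebesgue_measure]_(t in `]a, b]) (cst hi%:E) t))%E.
    + apply: ge0_le_integral.
      * exact: measurable_itv.
      * by move=> x _; rewrite lee_fin.
      * exact: measurable_funS mfE.
      * exact: measurable_cst.
      * move=> x; rewrite /= in_itv /= => /andP[ax xb].
        by rewrite lee_fin; case: (hz x ax xb).
    + by rewrite integral_cst //= lm -EFinM mulrC.
move: Hint.
have -> : (\int[lebesgue_measure]_(t in `]a, b]) (f t)%:E = (F b - F a)%:E)%E.
  by rewrite EFinB split addeAC subee // add0e.
by rewrite !lee_fin => /andP[].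
Qed.


Lemma exists_lt (R : realType) (G : R -> R) p :
  G x @[x --> -oo] --> (0:R) -> 0 < p -> exists M, G M < p.
Proof.
move=> /cvgr_lt G0 p0; have [M [_ HM]] := G0 p p0.
by exists (M - 1); apply: HM; rewrite ltrBlDr ltrDl.
Qed.

Lemma exists_ge (R : realType) (G : R -> R) p :
  G x @[x --> +oo] --> (1:R) -> p < 1 -> exists M, p <= G M.
Proof.
move=> /cvgr_gt G1 p1; have [M [_ HM]] := G1 p p1.
by exists (M + 1); apply/ltW/HM; rewrite ltrDl.
Qed.

Lemma distfun_quantile (R : realType) (G : R -> R) p x :
  is_distfun G -> 0 < p -> p < 1 -> (quantile G p <= x) = (p <= G x).
Proof.
move=> [Gh Gr G0 G1] p0 p1.
by apply: quantile_leP => //; [exact: exists_lt|exact: exists_ge].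
Qed.

Lemma quantile_cont (R : realType) (G : R -> R) p :
  is_distfun G -> continuous G -> 0 < p -> p < 1 -> G (quantile G p) = p.
Proof.
move=> dG cG p0 p1; apply/le_anti/andP; split; last first.
  by rewrite -distfun_quantile.
have lt : forall x, x < quantile G p -> G x < p.
  by move=> x; rewrite ltNge distfun_quantile // -ltNge.
apply: (@ler_cvg_to _ _ _ _ G (fun=> p) _ _ (cvg_at_left_filter (cG _)) (cvg_cst p)).
near=> z; apply/ltW/lt; near: z; exact: nbhs_left_lt.
Unshelve. all: by end_near.
Qed.

Set Implicit Arguments. Unset Strict Implicit.



Lemma massR (R : realType) (f F : R -> R) theta a b :
  is_density f F -> sym_unimodal f theta -> theta <= a -> a <= b ->
  (b - a) * f b <= F b - F a /\ F b - F a <= (b - a) * f a.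
Proof.
move=> hd [_ fR _] ta ab; apply: (@dens_bound R f) => //; first by case: hd => _ f0 _; exact: f0.
move=> z az zb; split.
- by apply: fR => //; apply: le_trans ta (ltW az).
- by apply: fR => //; apply: ltW.
Qed.

Lemma massL (R : realType) (f F : R -> R) theta a b :
  is_density f F -> sym_unimodal f theta -> a <= b -> b <= theta ->
  (b - a) * f a <= F b - F a /\ F b - F a <= (b - a) * f b.
Proof.
move=> hd [_ _ fL] ab bt; apply: (@dens_bound R f) => //; first by case: hd => _ f0 _; exact: f0.
move=> z az zb; split.
- by apply: fL => //; [apply: ltW | apply: le_trans zb bt].
- by apply: fL.
Qed.

Lemma shiftR (R : realType) (f F : R -> R) theta l l' d :
  is_density f F -> sym_unimodal f theta -> theta <= l -> l <= l' -> 0 <= d ->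
  F (l' + d) - F l' <= F (l + d) - F l.
Proof.
move=> hd hs tl ll' d0.
have [_ fR _] := hs.
have tl' : theta <= l' by apply: le_trans ll'.
have [le|lt] := leP l' (l + d).
- have [_ h1] := massR hd hs (le_trans tl' le) (lerD ll' (lexx d)).
  have [h2 _] := massR hd hs tl ll'.
  have ff : f (l + d) <= f l' by apply: fR.
  have e0 : 0 <= l' - l by rewrite subr_ge0.
  have := ler_wpM2l e0 ff.
  have E : l' + d - (l + d) = l' - l by rewrite opprD addrACA subrr addr0.
  rewrite E in h1; lra.
- have [_ h1] := massR hd hs tl' (eq_ind_r is_true d0 (lerDl l' d)).
  have [h2 _] := massR hd hs tl (eq_ind_r is_true d0 (lerDl l d)).
  have ff : f l' <= f (l + d) by apply: fR; [apply: le_trans (eq_ind_r is_true d0 (lerDl l d))|apply: ltW].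
  have := ler_wpM2l d0 ff.
  have E1 : l' + d - l' = d by rewrite addrAC subrr add0r.
  have E2 : l + d - l = d by rewrite addrAC subrr add0r.
  rewrite E1 in h1; rewrite E2 in h2; lra.
Qed.




Lemma sym_step (R : realType) (f F : R -> R) theta (h : R) (k : nat) :
  is_density f F -> sym_unimodal f theta -> 0 <= h ->
  `|F (theta + k%:R * h) + F (theta - k%:R * h) - 2 * F theta|
     <= h * (f theta - f (theta + k%:R * h)).
Proof.
move=> hd hs h0; have [fs _ _] := hs.
elim: k => [|k IH].
  rewrite mul0r addr0 subr0 subrr mulr0.
  have -> : F theta + F theta - 2 * F theta = 0 by lra.
  by rewrite normr0.
set c := k%:R * h.
have c0 : 0 <= c by rewrite mulr_ge0.
have E1 : k.+1%:R * h = c + h by rewrite /c -addn1 natrD mulrDl mul1r.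
rewrite E1.
have ta : theta <= theta + c by lra.
have s1 : theta + c <= theta + (c + h) by lra.
have [m1 m2] := massR hd hs ta s1.
have s2 : theta - (c + h) <= theta - c by lra.
have s3 : theta - c <= theta by lra.
have [m3 m4] := massL hd hs s2 s3.
have L1 : theta + (c + h) - (theta + c) = h by lra.
have L2 : theta - c - (theta - (c + h)) = h by lra.
rewrite L1 in m1 m2; rewrite L2 in m3 m4.
have fa : f (theta - c) = f (theta + c) by rewrite -fs.
have fah : f (theta - (c + h)) = f (theta + (c + h)) by rewrite -fs.
rewrite fa fah in m3 m4.
move: IH; rewrite ler_norml => /andP[i1 i2].
rewrite ler_norml; apply/andP; split; rewrite ?mulrBr in i1 i2 *; lra.
Qed.

Lemma Fsym0 (R : realType) (f F : R -> R) theta (u : R) :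
  is_density f F -> sym_unimodal f theta -> 0 <= u ->
  F (theta + u) + F (theta - u) = 2 * F theta.
Proof.
move=> hd hs u0; apply/eqP; rewrite -subr_eq0 -normr_eq0; apply/eqP.
set s := `|_|.
have f0 : forall x, 0 <= f x by case: hd => _ f0 _; exact: f0.
have s0 : 0 <= s by rewrite normr_ge0.
have key : forall k : nat, s * k.+1%:R <= u * f theta.
  move=> k; have k0 : 0 < k.+1%:R :> R by rewrite ltr0n.
  have := sym_step k.+1 hd hs (divr_ge0 u0 (ltW k0)).
  have Ek : k.+1%:R * (u / k.+1%:R) = u by rewrite mulrC divfK // gt_eqF.
  rewrite Ek -/s => hs'.
  rewrite -ler_pdivlMr //; apply: le_trans hs' _.
  rewrite mulrAC ler_pM2r ?invr_gt0 //; apply: ler_wpM2l => //.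
  by rewrite gerBl.
apply/le_anti; rewrite s0 andbT leNgt; apply/negP => sp.
have B0 : 0 <= u * f theta / s by rewrite divr_ge0 // mulr_ge0.
have := archi_boundP B0.
set n := Num.bound _ => hn.
have := key n; move: hn; rewrite ltr_pdivrMr // => hn.
have -> : s * n.+1%:R = n%:R * s + s by rewrite -addn1 natrD mulrDr mulr1 mulrC.
move=> kn; lra.
Qed.

Lemma distfun_le1 (R : realType) (G : R -> R) x : is_distfun G -> G x <= 1.
Proof.
move=> [Gh _ _ G1].
apply: (@ler_cvg_to _ _ _ _ (fun=> G x) G _ _ (cvg_cst _) G1).
near=> t; apply: Gh; near: t; by apply: nbhs_pinfty_ge; exact: num_real.
Unshelve. all: by end_near.
Qed.

Lemma distfun_ge0 (R : realType) (G : R -> R) x : is_distfun G -> 0 <= G x.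
Proof.
move=> [Gh _ G0 _].
apply: (@ler_cvg_to _ _ _ _ G (fun=> G x) _ _ G0 (cvg_cst _)).
near=> t; apply: Gh; near: t; by apply: nbhs_ninfty_le; exact: num_real.
Unshelve. all: by end_near.
Qed.

Lemma Fsym1 (R : realType) (f F : R -> R) theta z :
  is_density f F -> sym_unimodal f theta ->
  F (2 * theta - z) + F z = 2 * F theta.
Proof.
move=> hd hs; have [zt|tz] := leP z theta.
- have u0 : 0 <= theta - z by lra.
  have := Fsym0 hd hs u0.
  have -> : theta + (theta - z) = 2 * theta - z by lra.
  by have -> : theta - (theta - z) = z by lra.
- have u0 : 0 <= z - theta by lra.
  have := Fsym0 hd hs u0.
  have -> : theta + (z - theta) = z by lra.
  have -> : theta - (z - theta) = 2 * theta - z by lra.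
  by rewrite addrC.
Qed.

Lemma Fhalf (R : realType) (f F : R -> R) theta :
  is_distfun F -> is_density f F -> sym_unimodal f theta -> F theta = 1 / 2.
Proof.
move=> dF hd hs; have [_ _ F0 F1] := dF.
have sy := fun z => Fsym1 z hd hs.
have a1 : 1 <= 2 * F theta.
  apply: (@ler_cvg_to _ _ _ _ F (fun=> 2 * F theta) _ _ F1 (cvg_cst _)).
  near=> t; have := sy t; have := distfun_ge0 (2 * theta - t) dF; lra.
have a2 : 2 * F theta - 1 <= 0.
  apply: (@ler_cvg_to _ _ _ _ (fun=> 2 * F theta - 1) F _ _ (cvg_cst _) F0).
  near=> t; have := sy t; have := distfun_le1 (2 * theta - t) dF; lra.
lra.
Unshelve. all: by end_near.
Qed.




Lemma flat (R : realType) (f F : R -> R) theta x x' :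
  is_distfun F -> is_density f F -> sym_unimodal f theta ->
  x < x' -> x' <= theta -> F x' = F x -> F x = 0.
Proof.
move=> dF hd hs xx' x't Fe.
have [Fh _ F0 _] := dF.
have f0 : forall x, 0 <= f x by case: hd => _ f0 _; exact: f0.
have [m1 _] := massL hd hs (ltW xx') x't.
have fx : f x = 0.
  apply/le_anti; rewrite f0 andbT.
  have xp : 0 < x' - x by rewrite subr_gt0.
  rewrite -(pmulr_rle0 _ xp); rewrite Fe subrr in m1; exact: m1.
have cst : forall z, z <= x -> F z = F x.
  move=> z zx; have [_ m2] := massL hd hs zx (le_trans (ltW xx') x't).
  rewrite fx mulr0 in m2; apply/le_anti; rewrite Fh //=; lra.
apply/le_anti; rewrite (distfun_ge0 x dF) andbT.
apply: (@ler_cvg_to _ _ _ _ (fun=> F x) F _ _ (cvg_cst _) F0).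
near=> t; rewrite cst //; near: t; by apply: nbhs_ninfty_le; exact: num_real.
Unshelve. all: by end_near.
Qed.

Lemma DmonoB (R : realType) (f F : R -> R) theta W x x' :
  is_distfun F -> is_density f F -> sym_unimodal f theta -> 0 <= W ->
  theta - W / 2 <= x -> x <= x' -> x' <= theta ->
  F (x' + W) - F x' <= F (x + W) - F x.
Proof.
move=> dF hd hs W0 mx xx' x't.
have s1 := Fsym1 x hd hs; have s2 := Fsym1 x' hd hs.
have h := Fhalf dF hd hs.
have l1 : theta <= 2 * theta - x' by lra.
have l2 : 2 * theta - x' <= x + W by lra.
have d0 : 0 <= x' - x by lra.
have := shiftR hd hs l1 l2 d0.
have -> : x + W + (x' - x) = x' + W by lra.
have -> : 2 * theta - x' + (x' - x) = 2 * theta - x by lra.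
lra.
Qed.

Lemma Dmono (R : realType) (f F : R -> R) theta W x x' :
  is_distfun F -> is_density f F -> sym_unimodal f theta -> 0 <= W ->
  theta - W / 2 <= x -> x <= x' ->
  F (x' + W) - F x' <= F (x + W) - F x.
Proof.
move=> dF hd hs W0 mx xx'.
have [tx|xt] := leP theta x.
  exact: shiftR hd hs tx xx' W0.
have [x't|tx'] := leP x' theta.
  exact: DmonoB dF hd hs W0 mx xx' x't.
apply: le_trans (DmonoB dF hd hs W0 mx (ltW xt) (lexx theta)).
exact: shiftR hd hs (lexx theta) (ltW tx') W0.
Qed.




Lemma key (R : realType) (f F : R -> R) theta eps delta a alpha :
  is_distfun F -> continuous F -> is_density f F -> sym_unimodal f theta ->
  0 <= eps -> eps < 1 / 2 -> 0 <= delta -> delta < (1 - eps) / 2 ->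
  0 <= alpha -> alpha <= 1 ->
  (1 - eps) / 2 <= (1 - delta) * F a + delta * alpha ->
  (1 + eps) / 2 <= (1 - delta) * F (a + (quantile F ((1 + eps) / (2 * (1 - delta)))
           - quantile F ((1 - eps) / (2 * (1 - delta))))) + delta * alpha.
Proof.
move=> dF cF hd hs e0 e1 d0 d1 a0 a1 ha.
set W := (X in a + X).
have [Fh _ _ _] := dF.
set q := 1 - delta.
set pl := (1 - eps) / (2 * q); set pu := (1 + eps) / (2 * q).
have q0 : 0 < q by rewrite /q; lra.
have qpl : q * pl = (1 - eps) / 2 by rewrite /pl; field; rewrite /q; lra.
have qpu : q * pu = (1 + eps) / 2 by rewrite /pu; field; rewrite /q; lra.
have pl0 : 0 < pl by rewrite /pl divr_gt0 //; lra.
have pupl : pu - pl = eps / q.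
  by rewrite /pu /pl; field; rewrite /q; lra.
have eq0 : 0 <= eps / q by rewrite divr_ge0 // ltW.
have pu1 : pu < 1 by rewrite /pu ltr_pdivrMr ?mulr_gt0 //; rewrite /q; lra.
have pu0 : 0 < pu by rewrite /pu divr_gt0 //; lra.
have pl1 : pl < 1.
  have : 0 <= eps / q by rewrite divr_ge0 // ltW.
  lra.
have pu2 : 1 / 2 <= pu.
  by rewrite /pu ler_pdivlMr ?mulr_gt0 //; rewrite /q; lra.
set x1 := quantile F pl; set y1 := quantile F pu.
have Fx1 : F x1 = pl by exact: quantile_cont.
have Fy1 : F y1 = pu by exact: quantile_cont.
have x1y1 : x1 <= y1 by rewrite /x1 distfun_quantile // Fy1; lra.
have EW : W = y1 - x1 by [].
have W0 : 0 <= W by rewrite EW subr_ge0.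
have Fh2 := Fhalf dF hd hs.
have [hi|lo] := leP pl (F a).
- have x1a : x1 <= a by rewrite /x1 distfun_quantile.
  have : F y1 <= F (a + W) by apply: Fh; rewrite EW; lra.
  rewrite Fy1 => h.
  have : q * pu <= q * F (a + W) by rewrite ler_pM2l.
  have : 0 <= delta * alpha by rewrite mulr_ge0.
  rewrite qpu; lra.
- have ax1 : a < x1.
    rewrite ltNge; apply/negP => x1a.
    by have := Fh _ _ x1a; rewrite Fx1; lra.
  have ty1 : theta <= y1.
    rewrite leNgt; apply/negP => yt.
    have Fyt := Fh _ _ (ltW yt).
    have Fe : F theta = F y1 by apply/le_anti; rewrite Fyt Fy1 Fh2 pu2.
    have := flat dF hd hs yt (lexx theta) Fe.
    by rewrite Fy1; lra.
  set u := 2 * theta - y1.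
  have Fu : F u = 1 - pu by have := Fsym1 y1 hd hs; rewrite /u; lra.
  have Fa1 : 1 - pu <= F a.
    rewrite -(ler_pM2l q0) mulrBr mulr1 qpu.
    have : delta * alpha <= delta by rewrite -{2}(mulr1 delta) ler_wpM2l.
    rewrite /q in ha *; lra.
  have ua : u <= a.
    rewrite leNgt; apply/negP => au.
    have Fau : F a = F u by apply/le_anti; rewrite Fu Fa1 andbT -Fu; apply: Fh; apply: ltW.
    have ut : u <= theta by rewrite /u; lra.
    have := flat dF hd hs au ut (esym Fau).
    by move: Fa1; rewrite Fau Fu => h1 h2; have := pu1; lra.
  set mu := theta - W / 2.
  have Dx1 : F (x1 + W) - F x1 = eps / q.
    by rewrite EW addrCA subrr addr0 Fy1 Fx1.
  have Da : eps / q <= F (a + W) - F a.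
    have [ma|am] := leP mu a.
      by rewrite -Dx1; apply: Dmono dF hd hs W0 ma (ltW ax1).
    have m2 : mu <= 2 * mu - a by lra.
    have a2 : 2 * mu - a <= x1 by rewrite /mu /u EW in ua *; lra.
    have := Dmono dF hd hs W0 m2 a2; rewrite Dx1.
    have -> : 2 * mu - a + W = 2 * theta - a by rewrite /mu; lra.
    have -> : 2 * mu - a = 2 * theta - (a + W) by rewrite /mu; lra.
    have := Fsym1 a hd hs; have := Fsym1 (a + W) hd hs; lra.
  have : q * (eps / q) <= q * (F (a + W) - F a) by rewrite ler_pM2l.
  have -> : q * (eps / q) = eps by field; lra.
  rewrite mulrBr /q => h; lra.
Qed.




Lemma mixture_distfun (R : realType) (F H : R -> R) delta :
  is_distfun F -> is_distfun H -> 0 <= delta -> delta <= 1 ->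
  is_distfun (mixture delta F H).
Proof.
move=> [Fh Fr F0 F1] [Hh Hr H0 H1] d0 d1; split.
- move=> x y xy; rewrite /mixture; apply: lerD; apply: ler_wpM2l.
  + by rewrite subr_ge0.
  + exact: Fh.
  + exact: d0.
  + exact: Hh.
- move=> a.
  exact: (cvgD (cvgM (cvg_cst (1 - delta)) (Fr a)) (cvgM (cvg_cst delta) (Hr a))).
- have := cvgD (cvgM (cvg_cst (1 - delta)) F0) (cvgM (cvg_cst delta) H0).
  by rewrite !mulr0 addr0 => h; apply: h.
- have := cvgD (cvgM (cvg_cst (1 - delta)) F1) (cvgM (cvg_cst delta) H1).
  by rewrite !mulr1 subrK => h; apply: h.
Qed.

Lemma pointmass_distfun (R : realType) (m : R) : is_distfun (pointmass_df m).
Proof.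
rewrite /pointmass_df; split.
- move=> x y xy; case: ifP => mx; case: ifP => my //.
  by rewrite (le_trans mx xy) in my.
- move=> a; apply: cvg_near_cst; case: (leP m a) => ma.
  + near=> x; rewrite ifT //; apply: le_trans ma (ltW _); near: x; exact: nbhs_right_gt.
  + near=> x; rewrite ifF //; apply/negbTE; rewrite -ltNge; near: x.
    exact: nbhs_right_lt.
- apply: cvg_near_cst; near=> x; rewrite ifF //; apply/negbTE; rewrite -ltNge; near: x.
  by apply: nbhs_ninfty_lt; try exact: num_real.
- apply: cvg_near_cst; near=> x.
  have mx : m <= x by near: x; apply: nbhs_pinfty_ge; exact: num_real.
  by rewrite mx.
Unshelve. all: by end_near.
Qed.




Lemma quantile_mono (R : realType) (G : R -> R) p p' :
  is_distfun G -> 0 < p -> p <= p' -> p' < 1 -> quantile G p <= quantile G p'.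
Proof.
move=> dG p0 pp p1.
rewrite distfun_quantile //; last by apply: le_lt_trans p1.
apply: (le_trans pp); rewrite -distfun_quantile //; exact: (lt_le_trans p0 pp).
Qed.

Lemma upper (R : realType) (F f H : R -> R) (theta eps delta : R) :
  is_distfun F -> continuous F ->
  is_density f F -> sym_unimodal f theta ->
  0 <= eps -> eps < 1 / 2 ->
  0 <= delta -> delta < (1 - eps) / 2 -> is_distfun H ->
  quantile (mixture delta F H) ((1 + eps) / 2)
   - quantile (mixture delta F H) ((1 - eps) / 2)
  <= quantile F ((1 + eps) / (2 * (1 - delta)))
           - quantile F ((1 - eps) / (2 * (1 - delta))).
Proof.
move=> dF cF hd hs e0 e1 d0 d1 dH.
have d1' : delta <= 1 by lra.
have dG := mixture_distfun dF dH d0 d1'.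
rewrite lerBlDl.
set a := quantile _ ((1 - eps) / 2).
have p0 : 0 < (1 - eps) / 2 by lra.
have p1 : (1 - eps) / 2 < 1 by lra.
have q0 : 0 < (1 + eps) / 2 by lra.
have q1 : (1 + eps) / 2 < 1 by lra.
have ha : (1 - eps) / 2 <= mixture delta F H a by rewrite -distfun_quantile.
rewrite distfun_quantile //.
have W0 : 0 <= quantile F ((1 + eps) / (2 * (1 - delta)))
           - quantile F ((1 - eps) / (2 * (1 - delta))).
  rewrite subr_ge0; apply: quantile_mono => //.
  - by apply: divr_gt0; lra.
  - by rewrite ler_pM2r; [lra | rewrite invr_gt0; lra].
  - by rewrite ltr_pdivrMr; lra.
have := (key dF cF hd hs e0 e1 d0 d1 (distfun_ge0 a dH) (distfun_le1 a dH) ha).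
move=> h; apply: le_trans h _; rewrite /mixture lerD2l; apply: ler_wpM2l => //.
by have [Hh _ _ _] := dH; apply: Hh; rewrite lerDl.
Qed.

Lemma Gm_quant (R : realType) (F : R -> R) delta p' pu m :
  is_distfun F -> 0 <= delta -> delta < 1 -> 0 < p' -> p' <= pu -> pu < 1 ->
  quantile F pu < m ->
  quantile (mixture delta F (pointmass_df m)) ((1 - delta) * p') = quantile F p'.
Proof.
move=> dF d0 d1 p0 ppu pu1 qm.
have d1' : delta <= 1 by apply: ltW.
have dG := mixture_distfun dF (pointmass_distfun m) d0 d1'.
have q0 : 0 < 1 - delta by rewrite subr_gt0.
have p1 : p' < 1 by apply: le_lt_trans pu1.
have pp0 : 0 < (1 - delta) * p' by rewrite mulr_gt0.
have pp1 : (1 - delta) * p' < 1.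
  have : (1 - delta) * p' <= p' by rewrite ler_piMl ?(ltW p0) //; lra.
  move=> h; exact: le_lt_trans h p1.
have pm0 : forall x, 0 <= pointmass_df m x by move=> x; rewrite /pointmass_df; case: ifP.
apply/le_anti/andP; split.
- rewrite distfun_quantile // /mixture.
  have h : p' <= F (quantile F p') by rewrite -distfun_quantile.
  have : (1 - delta) * p' <= (1 - delta) * F (quantile F p') by rewrite ler_pM2l.
  have : 0 <= delta * pointmass_df m (quantile F p') by rewrite mulr_ge0.
  lra.
- set z := quantile (mixture _ _ _) _.
  have [mz|zm] := leP m z.
    apply: (le_trans (quantile_mono dF p0 ppu pu1)).
    exact: ltW (lt_le_trans qm mz).
  rewrite distfun_quantile //.
  have : (1 - delta) * p' <= mixture delta F (pointmass_df m) z.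
    by rewrite -distfun_quantile.
  rewrite /mixture /pointmass_df ifF; last by apply/negbTE; rewrite -ltNge.
  by rewrite mulr0 addr0 ler_pM2l.
Qed.

Unset Implicit Arguments. Set Strict Implicit.



Theorem mainTheorem6 (R : realType) (F f : R -> R) (theta eps delta : R) :
  is_distfun F -> continuous F ->
  is_density f F -> sym_unimodal f theta ->
  0 <= eps -> eps < 1 / 2 ->
  0 <= delta -> delta < (1 - eps) / 2 ->
  let pu := (1 + eps) / 2 in
  let pl := (1 - eps) / 2 in
  let v := quantile F ((1 + eps) / (2 * (1 - delta)))
           - quantile F ((1 - eps) / (2 * (1 - delta))) in
  ereal_sup [set ((quantile (mixture delta F H) pu
                   - quantile (mixture delta F H) pl)%:E)%E
            | H in [set H : R -> R | is_distfun H]] = v%:E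
  /\
  (quantile (mixture delta F (pointmass_df m)) pu
   - quantile (mixture delta F (pointmass_df m)) pl) @[m --> +oo] --> v.
Proof.
move=> dF cF hd hs e0 e1 d0 d1 pu pl v.
have d1' : delta < 1 by lra.
have q0 : 0 < 1 - delta by lra.
have pl0 : 0 < (1 - eps) / (2 * (1 - delta)) by apply: divr_gt0; lra.
have plpu : (1 - eps) / (2 * (1 - delta)) <= (1 + eps) / (2 * (1 - delta)).
  by rewrite ler_pM2r; [lra | rewrite invr_gt0; lra].
have pu1 : (1 + eps) / (2 * (1 - delta)) < 1 by rewrite ltr_pdivrMr; lra.
have Epl : pl = (1 - delta) * ((1 - eps) / (2 * (1 - delta))).
  by rewrite /pl; field; lra.
have Epu : pu = (1 - delta) * ((1 + eps) / (2 * (1 - delta))).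
  by rewrite /pu; field; lra.
have width : forall m, quantile F ((1 + eps) / (2 * (1 - delta))) < m ->
    quantile (mixture delta F (pointmass_df m)) pu
    - quantile (mixture delta F (pointmass_df m)) pl = v.
  move=> m hm; rewrite Epu Epl.
  rewrite (Gm_quant dF d0 d1' _ (lexx _) pu1 hm); last by apply: lt_le_trans plpu.
  by rewrite (Gm_quant dF d0 d1' pl0 plpu pu1 hm).
split.
- apply/le_anti/andP; split.
  + apply: ge_ereal_sup => _ [H dH <-]; rewrite lee_fin.
    exact: (upper dF cF hd hs e0 e1 d0 d1 dH).
  + apply: ereal_sup_ubound.
    exists (pointmass_df (quantile F ((1 + eps) / (2 * (1 - delta))) + 1)).
      exact: pointmass_distfun.
    by rewrite width // ltrDl.
- apply: cvg_near_cst; near=> m; apply: width; near: m.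
  by apply: nbhs_pinfty_gt; try exact: num_real.
Unshelve. all: by end_near.
Qed.
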